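(* Let $\mathcal{G}=\langle\mathbb{V},\mathbb{E}\rangle$ and the bijection $e$ be as in the context, and let $\pi$ be an $\mathcal{H}^{(\ast)}$-partition of $\mathcal{P}(\mathcal{G},e)$ in which every gadget $\mathcal{N}_v$, $v\in\mathbb{V}$, is well-oriented. Then $\{\langle v,u\rangle:\{\langle v,u\rangle\}\in\pi\}$ (the set of arcs of $\mathcal{G}$ which, as vertices of $\mathcal{P}(\mathcal{G},e)$, form singleton blocks of $\pi$) is a feedback arc set of $\mathcal{G}$ of size at most $|\pi|-|\mathbb{V}|\cdot(|\mathbb{E}|+1)$.
   Context: Standing assumption: $\mathcal{G}=\langle\mathbb{V},\mathbb{E}\rangle$ is a finite directed graph with $\mathbb{V}\ne\emptyset$, without self-loops, in which every vertex has in-degree $1$ or out-degree $1$; let $m=|\mathbb{E}|$ and let $e:\mathbb{E}\to\{1,\dots,m\}$ be a bijection. A feedback arc set of $\mathcal{G}$ is a subset of $\mathbb{E}$ meeting every directed cycle. For $v\in\mathbb{V}$ the gadget $\mathcal{N}_v=\langle\mathcal{V}_v,\mathcal{E}_v\rangle$ has vertices $\mathcal{V}_v=\{v_{i,j}:0\le i,j\le m\}$ (distinct for distinct $v$) and arcs $\mathcal{E}_v=\{\langle v_{i,j},v_{i,j+1}\rangle:0\le i\le m,0\le j<m\}\cup\{\langle v_{i,j},v_{i+1,j}\rangle:0\le i<m,0\le j\le m\}$. Let $\mathcal{L}_v=\{\{v_{i,0},\dots,v_{i,m}\}:0\le i\le m\}$ and $\mathcal{R}_v=\{\{v_{0,i},\dots,v_{m,i}\}:0\le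 i\le m\}$. The digraph $\mathcal{P}(\mathcal{G},e)$ has vertex set $\bigcup_{v\in\mathbb{V}}\mathcal{V}_v\cup\mathbb{E}$ (each arc of $\mathcal{G}$ is also a vertex) and arc set $\bigcup_{v\in\mathbb{V}}\mathcal{E}_v\cup\{\langle\langle v,u\rangle,v_{e(\langle v,u\rangle),0}\rangle:\langle v,u\rangle\in\mathbb{E}\}\cup\{\langle\langle v,u\rangle,u_{0,e(\langle v,u\rangle)}\rangle:\langle v,u\rangle\in\mathbb{E}\}$; it is a DAG. For a DAG $G$, a partition $\pi$ of its vertex set is an $\mathcal{H}^{(\ast)}$-partition if every induced subgraph $G[P]$, $P\in\pi$, has a directed Hamiltonian path and the quotient digraph $G/\pi$ (vertex set $\pi$, arc $\langle P,Q\rangle$ for $P\ne Q$ whenever some arc of $G$ goes from $P$ to $Q$) is acyclic. For such $\pi$ of $\mathcal{P}(\mathcal{G},e)$ and $v\in\mathbb{V}$, let $\pi|_{\mathcal{N}_v}=\{P\cap\mathcal{V}_v:P\in\pi,\ P\cap\mathcal{V}_v\ne\emptyset\}$; the gadget $\mathcal{N}_v$ is well-oriented in $\pi$ if $\pi|_{\mathcal{N}_v}=\mathcal{L}_v$ or $\pi|_{\mathcal{N}_v}=\mathcal{R}_v$. *)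

(* Defs.v *)
From mathcomp Require Import all_boot.
Set Implicit Arguments. Unset Strict Implicit. Unset Printing Implicit Defensive.

Definition dcycle (T : finType) (r : rel T) (c : seq T) : Prop :=
  [/\ c != [::], uniq c & cycle r c].

Definition cycle_arcs (T : Type) (c : seq T) : seq (T * T) := zip c (rot 1 c).

Definition acyclic (T : finType) (r : rel T) : Prop :=
  forall c : seq T, c != [::] -> ~~ cycle r c.

Definition ham_path (T : finType) (r : rel T) (P : {set T}) : Prop :=
  exists s : seq T, [/\ uniq s, (forall x, (x \in s) = (x \in P)) & sorted r s].

Definition quot_arc (T : finType) (r : rel T) (pi : {set {set T}}) : rel {set T} :=
  fun P Q => [&& P \in pi, Q \in pi, P != Q &
                 [exists x in P, exists y in Q, r x y]].

Definition Hstar_partition (T : finType) (r : rel T) (pi : {set {set T}}) : Prop :=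
  [/\ partition pi [set: T],
      (forall P, P \in pi -> ham_path r P) &
      acyclic (quot_arc r pi)].

Definition garc (V : finType) (E : {set V * V}) : rel V := fun x y => (x, y) \in E.

Definition feedback_arc_set (V : finType) (E F : {set V * V}) : Prop :=
  F \subset E /\
  forall c : seq V, dcycle (garc E) c -> exists2 a, a \in F & a \in cycle_arcs c.

Section Construction.
Variables (V : finType) (E : {set V * V}) (e : V * V -> nat).

Definition mE := #|E|.
Definition EV := {a : V * V | a \in E}.
(* gadget vertex v_{i,j} = inl (v, i, j); arc vertex a = inr a *)
Definition PV := ((V * 'I_mE.+1 * 'I_mE.+1) + EV)%type.

Definition Parc : rel PV := fun x y =>
  match x, y with
  | inl (v, i, j), inl (v', i', j') =>
      (v == v') && (((i == i') && (nat_of_ord j' == j.+1))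
                    || ((j == j') && (nat_of_ord i' == i.+1)))
  | inr a, inl (w, i, j) =>
      ((w == (val a).1) && (nat_of_ord i == e (val a)) && (nat_of_ord j == 0))
      || ((w == (val a).2) && (nat_of_ord i == 0) && (nat_of_ord j == e (val a)))
  | _, _ => false
  end.

Definition gadget (v : V) : {set PV} :=
  [set x : PV | if x is inl (w, _, _) then w == v else false].

Definition Lrows (v : V) : {set {set PV}} :=
  [set [set (inl (v, i, j) : PV) | j : 'I_mE.+1] | i : 'I_mE.+1].
Definition Rcols (v : V) : {set {set PV}} :=
  [set [set (inl (v, j, i) : PV) | j : 'I_mE.+1] | i : 'I_mE.+1].

Definition restr (pi : {set {set PV}}) (v : V) : {set {set PV}} :=
  [set P :&: gadget v | P in pi & P :&: gadget v != set0].

Definition well_oriented (pi : {set {set PV}}) (v : V) : bool :=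
  (restr pi v == Lrows v) || (restr pi v == Rcols v).

Definition singleton_arcs (pi : {set {set PV}}) : {set V * V} :=
  [set a : V * V | [exists b : EV, (val b == a) && ([set (inr b : PV)] \in pi)]].

End Construction.

(* Main.v *)
Require Import Defs.
From mathcomp Require Import all_boot.
From mathcomp Require Import zify.
Set Implicit Arguments. Unset Strict Implicit. Unset Printing Implicit Defensive.

Section Proof5.
Variables (V : finType) (E : {set V * V}) (e : V * V -> nat).
Hypothesis Hloop : forall v : V, (v, v) \notin E.
Hypothesis He_rng : forall a, a \in E -> 0 < e a <= #|E|.
Local Notation Pr := (@Parc V E e).
Variable pi : {set {set PV E}}.
Hypothesis Hpi : Hstar_partition Pr pi.
Hypothesis Hwo : forall v : V, well_oriented pi v.

Local Notation T := (PV E).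
Local Notation Ix := ('I_(mE E).+1).

Definition weight (x : T) : nat := if x is inl (_, i, j) then i + j else 0.
Definition lbl (x : T) : option V := if x is inl (v, _, _) then Some v else None.

Lemma Parc_weight x y : Pr x y -> weight x < weight y.
Proof.
case: x => [[[v i] j]|a]; case: y => [[[w i'] j']|b] //=.
  case/andP=> _ /orP[/andP[/eqP <- /eqP ->]|/andP[/eqP <- /eqP ->]].
    by rewrite addnS ltnSn.
  by rewrite addSn ltnSn.
have := He_rng (valP a) => /andP[ha _].
by case/orP=> /andP[/andP[_ /eqP ->] /eqP ->]; rewrite ?addn0.
Qed.

Lemma Parc_lbl x y : Pr x y -> lbl y != None /\ (lbl x != None -> lbl y = lbl x).
Proof.
case: x => [[[v i] j]|a]; case: y => [[[w i'] j']|b] //=.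
by case/andP=> /eqP -> _.
Qed.

Lemma Parc_inr x b : Pr x (inr b) = false.
Proof. by case: x => [[[v i] j]|a]. Qed.

Lemma path_weight x s : path Pr x s -> all (fun y => weight x < weight y) s.
Proof.
move=> H; have H' : path (fun a b => weight a < weight b) x s.
  by apply: sub_path H => a b; apply: Parc_weight.
by apply: (order_path_min _ H') => a b c; apply: ltn_trans.
Qed.

Lemma path_noinr x s b : path Pr x s -> inr b \notin s.
Proof.
elim: s x => [|y s IH] x //= /andP[H1 H2].
rewrite inE negb_or (IH y H2) andbT; apply/negP => /eqP Hy; subst; by rewrite Parc_inr in H1.
Qed.

Lemma path_lbl0 x s : path Pr x s -> lbl x != None -> all (fun y => lbl y == lbl x) s.
Proof.
elim: s x => [|y s IH] x //= /andP[H1 H2] Hx.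
have [Hy Hyx] := Parc_lbl H1. rewrite Hyx // eqxx /=.
have := IH _ H2 Hy; rewrite Hyx //.
Qed.

Lemma path_lbl x s : path Pr x s -> forall y z, y \in s -> z \in s -> lbl y = lbl z.
Proof.
case: s => [|x1 s] //= /andP[H1 H2] y z.
have [Hx1 _] := Parc_lbl H1.
have /allP A := path_lbl0 H2 Hx1.
rewrite !inE => /orP[/eqP ->|/A/eqP ->] /orP[/eqP ->|/A/eqP ->] //.
Qed.


Lemma Hpart : partition pi [set: T].
Proof. by case: Hpi. Qed.
Lemma Hcov : cover pi = [set: T].
Proof. by case/and3P: Hpart => /eqP. Qed.
Lemma Htriv : trivIset pi.
Proof. by case/and3P: Hpart. Qed.

Definition blk (x : T) := pblock pi x.
Lemma blk_in x : blk x \in pi.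
Proof. by apply: pblock_mem; rewrite Hcov inE. Qed.
Lemma mem_blk x : x \in blk x.
Proof. by rewrite /blk mem_pblock Hcov inE. Qed.
Lemma blk_eq P x : P \in pi -> x \in P -> blk x = P.
Proof. by move=> HP Hx; apply: def_pblock Htriv HP Hx. Qed.

Lemma hamP P : P \in pi -> exists s : seq T, [/\ uniq s, (forall x, (x \in s) = (x \in P)) & sorted Pr s].
Proof. by case: Hpi => _ H _ /H. Qed.

Lemma LBL P x y : P \in pi -> x \in P -> y \in P -> lbl x != None -> lbl y != None -> lbl x = lbl y.
Proof.
move=> /hamP [s [_ Hs Hso]]; rewrite -!Hs.
case: s Hs Hso => [|x0 s] // Hs /= Hso.
rewrite !inE => /orP[/eqP ->|Hx] /orP[/eqP ->|Hy] // Hnx Hny.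
- have /allP A := path_lbl0 Hso Hnx. by have /eqP := A _ Hy.
- have /allP A := path_lbl0 Hso Hny. by have /eqP := A _ Hx.
- exact: path_lbl Hso _ _ Hx Hy.
Qed.

Lemma blk_inr_head b : exists s : seq T,
  [/\ (inr b :: s) =i (blk (inr b)) , path Pr (inr b) s & uniq (inr b :: s)].
Proof.
have [s [Hu Hs Hso]] := hamP (blk_in (inr b)).
have : inr b \in s by rewrite Hs mem_blk.
case: s Hu Hs Hso => [|x0 s] // Hu Hs /= Hso.
rewrite inE (negbTE (path_noinr b Hso)) orbF => /eqP Hx0; subst x0.
by exists s; split => // x y; rewrite Hs.
Qed.

Lemma NOZERO b v : (inl (v, ord0, ord0) : T) \notin blk (inr b).
Proof.
have [s [Hs Hp _]] := blk_inr_head b.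
rewrite -Hs inE /=.
have /allP A := path_weight Hp.
apply/negP => Hin; by have := A _ Hin.
Qed.

Lemma ATT (b : EV E) : [set (inr b : T)] \notin pi ->
  (inl ((val b).1, inord (e (val b)), ord0) : T) \in blk (inr b) \/
  (inl ((val b).2, ord0, inord (e (val b))) : T) \in blk (inr b).
Proof.
move=> Hns.
have [s [Hs Hp _]] := blk_inr_head b.
have HeL : e (val b) < (mE E).+1.
  by have /andP[_ H] := He_rng (valP b); rewrite ltnS.
case: s Hs Hp => [|z s] Hs Hp.
  have : blk (inr b) = [set inr b].
    by apply/setP => y; rewrite -Hs !inE.
  by move=> Heq; move: (blk_in (inr b)); rewrite Heq (negbTE Hns).
have Hz : z \in blk (inr b) by rewrite -Hs !inE eqxx orbT.
move: Hp => /= /andP[Hz1 _].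
case: z Hs Hz Hz1 => [[[w i] j]|a] Hs Hz //=.
case/orP=> /andP[/andP[/eqP Hw /eqP Hi] /eqP Hj].
- left; suff -> : (inl ((val b).1, inord (e (val b)), ord0) : T) = inl (w, i, j) by [].
  by rewrite Hw; congr (inl (_, _, _)); apply: val_inj; rewrite /= ?inordK ?Hi ?Hj.
- right; suff -> : (inl ((val b).2, ord0, inord (e (val b))) : T) = inl (w, i, j) by [].
  by rewrite Hw; congr (inl (_, _, _)); apply: val_inj; rewrite /= ?inordK ?Hi ?Hj.
Qed.

Lemma ROW v P (i j : Ix) : restr pi v = Lrows E v -> P \in pi -> (inl (v, i, j) : T) \in P ->
  forall i' j' : Ix, ((inl (v, i', j') : T) \in P) = (i' == i).
Proof.
move=> Hr HP Hx.
have HPg : P :&: gadget E v \in restr pi v.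
  apply/imsetP; exists P => //; rewrite inE HP /=; apply/set0Pn; exists (inl (v, i, j)).
  by rewrite inE Hx /gadget inE /=.
have Hmem : forall i' j' : Ix, ((inl (v, i', j') : T) \in P) = ((inl (v, i', j') : T) \in P :&: gadget E v).
  by move=> i' j'; rewrite inE [_ \in gadget _ _]inE eqxx andbT.
move: HPg; rewrite Hr => /imsetP [i0 _ Heq].
have Hi0 : i = i0.
  move: (Hmem i j); rewrite Hx Heq => /esym/imsetP [j0 _ Hq]. by case: Hq.
subst i0 => i' j'; rewrite Hmem Heq; apply/imsetP/eqP => [[j0 _ Hq]|->]; first by case: Hq.
by exists j'.
Qed.

Lemma COL v P (i j : Ix) : restr pi v = Rcols E v -> P \in pi -> (inl (v, i, j) : T) \in P ->
  forall i' j' : Ix, ((inl (v, i', j') : T) \in P) = (j' == j).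
Proof.
move=> Hr HP Hx.
have HPg : P :&: gadget E v \in restr pi v.
  apply/imsetP; exists P => //; rewrite inE HP /=; apply/set0Pn; exists (inl (v, i, j)).
  by rewrite inE Hx /gadget inE /=.
have Hmem : forall i' j' : Ix, ((inl (v, i', j') : T) \in P) = ((inl (v, i', j') : T) \in P :&: gadget E v).
  by move=> i' j'; rewrite inE [_ \in gadget _ _]inE eqxx andbT.
move: HPg; rewrite Hr => /imsetP [i0 _ Heq].
have Hi0 : j = i0.
  move: (Hmem i j); rewrite Hx Heq => /esym/imsetP [j0 _ Hq]. by case: Hq.
subst i0 => i' j'; rewrite Hmem Heq; apply/imsetP/eqP => [[j0 _ Hq]|->]; first by case: Hq.
by exists i'.
Qed.

Lemma gadget_conn v (i j : Ix) : connect Pr (inl (v, ord0, ord0)) (inl (v, i, j)).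
Proof.
have H1 : forall k, k <= mE E -> connect Pr (inl (v, ord0, ord0)) (inl (v, inord k, ord0)).
  elim=> [|k IH] Hk.
    by have -> : (inord 0 : Ix) = ord0 by apply: val_inj; rewrite /= inordK.
  apply: connect_trans (IH (ltnW Hk)) _; apply: connect1 => /=.
  by rewrite eqxx /= !inordK ?eqxx ?orbT // ltnS ?(ltnW Hk).
have H2 : forall k, k <= mE E -> connect Pr (inl (v, i, ord0)) (inl (v, i, inord k)).
  elim=> [|k IH] Hk.
    by have -> : (inord 0 : Ix) = ord0 by apply: val_inj; rewrite /= inordK.
  apply: connect_trans (IH (ltnW Hk)) _; apply: connect1 => /=.
  by rewrite !eqxx /= !inordK ?eqxx // ltnS ?(ltnW Hk).
have Hi : (inord i : Ix) = i by apply: val_inj; rewrite /= inordK.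
have Hj : (inord j : Ix) = j by apply: val_inj; rewrite /= inordK.
apply: connect_trans (H1 i _) _; first by rewrite -ltnS.
rewrite Hi -Hj; apply: H2; by rewrite -ltnS.
Qed.

Local Notation qa := (quot_arc Pr pi).

Lemma lift x y : connect Pr x y -> connect qa (blk x) (blk y).
Proof.
move/connectP=> [p Hp ->]; elim: p x Hp => [|z p IH] x //= /andP[Hxz Hp].
apply: connect_trans (IH _ Hp).
case: (eqVneq (blk x) (blk z)) => [->|Hne] //.
apply: connect1; rewrite /quot_arc !blk_in Hne /=.
by apply/existsP; exists x; rewrite mem_blk /=; apply/existsP; exists z; rewrite mem_blk.
Qed.

Lemma ACY X Y : qa X Y -> connect qa Y X -> False.
Proof.
move=> HXY /connectP [p Hp HX].
case: Hpi => _ _ /(_ (Y :: p) isT) /negP; apply.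
by rewrite /= rcons_path Hp -HX.
Qed.

Definition tr X Y := exists2 Z, connect qa X Z & exists2 W, qa Z W & connect qa W Y.

Lemma tr_conn X Y : tr X Y -> connect qa X Y.
Proof.
move=> [Z H1 [W H2 H3]]; apply: connect_trans H1 _; apply: connect_trans _ H3; exact: connect1.
Qed.

Lemma tr_contra X Y : tr X Y -> connect qa Y X -> False.
Proof.
move=> [Z H1 [W H2 H3]] H4; apply: (ACY H2).
by apply: connect_trans H3 (connect_trans H4 H1).
Qed.

Definition F (v : V) := blk (inl (v, ord0, ord0)).
Definition L (v : V) := restr pi v == Lrows E v.
Lemma notL v : ~~ L v -> restr pi v = Rcols E v.
Proof. by move: (Hwo v); rewrite /well_oriented /L => /orP[->|/eqP]. Qed.
Definition R (u x : V) := ((u, x) \in E) && ((u, x) \notin singleton_arcs pi).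

Lemma Rb u x (H : (u, x) \in E) : (u, x) \notin singleton_arcs pi ->
  [set (inr (exist _ (u, x) H : EV E) : T)] \notin pi.
Proof.
apply: contra => Hin; rewrite inE; apply/existsP; exists (exist _ (u, x) H).
by rewrite Hin eqxx.
Qed.

Lemma StepL u x : R u x -> L x -> tr (F u) (F x).
Proof.
case/andP=> HE Hns HLx.
have Hns' := Rb HE Hns.
have HeL : e (u, x) < (mE E).+1 by have /andP[_ H] := He_rng HE; rewrite ltnS.
case: (ATT Hns') => /= Hz; last first.
  by have := NOZERO (exist _ (u, x) HE) x; rewrite (ROW (eqP HLx) (blk_in _) Hz) eqxx.
exists (blk (inr (exist _ (u, x) HE))).
  rewrite -(blk_eq (blk_in _) Hz); exact: lift (gadget_conn _ _ _).
set y : T := inl (x, ord0, inord (e (u, x))).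
exists (blk y).
  rewrite /quot_arc !blk_in /=; apply/andP; split.
    apply/negP => /eqP Heq.
    have Hy : y \in blk (inr (exist _ (u, x) HE)) by rewrite Heq mem_blk.
    have [Hux] := LBL (blk_in _) Hz Hy isT isT.
    by have := HE; rewrite Hux (negbTE (Hloop x)).
  apply/existsP; exists (inr (exist _ (u, x) HE)); rewrite mem_blk /=.
  apply/existsP; exists y; rewrite mem_blk /= inordK // !eqxx.
  by rewrite orbT.
have Hy0 : (inl (x, ord0, ord0) : T) \in blk y.
  by rewrite (ROW (eqP HLx) (blk_in y) (mem_blk y)).
by rewrite /F (blk_eq (blk_in y) Hy0).
Qed.

Lemma StepR u x : R u x -> ~~ L u -> tr (F x) (F u).
Proof.
case/andP=> HE Hns HLu.
have Hns' := Rb HE Hns.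
have HeL : e (u, x) < (mE E).+1 by have /andP[_ H] := He_rng HE; rewrite ltnS.
case: (ATT Hns') => /= Hz.
  by have := NOZERO (exist _ (u, x) HE) u; rewrite (COL (notL HLu) (blk_in _) Hz) eqxx.
exists (blk (inr (exist _ (u, x) HE))).
  rewrite -(blk_eq (blk_in _) Hz); exact: lift (gadget_conn _ _ _).
set y : T := inl (u, inord (e (u, x)), ord0).
exists (blk y).
  rewrite /quot_arc !blk_in /=; apply/andP; split.
    apply/negP => /eqP Heq.
    have Hy : y \in blk (inr (exist _ (u, x) HE)) by rewrite Heq mem_blk.
    have [Hux] := LBL (blk_in _) Hz Hy isT isT.
    by have := HE; rewrite Hux (negbTE (Hloop u)).
  apply/existsP; exists (inr (exist _ (u, x) HE)); rewrite mem_blk /=.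
  apply/existsP; exists y; rewrite mem_blk /= inordK // !eqxx.
  by [].
have Hy0 : (inl (u, ord0, ord0) : T) \in blk y.
  by rewrite (COL (notL HLu) (blk_in y) (mem_blk y)).
by rewrite /F (blk_eq (blk_in y) Hy0).
Qed.

Lemma PropL u x : R u x -> L x -> L u.
Proof.
case/andP=> HE Hns HLx.
have Hns' := Rb HE Hns.
case: (ATT Hns') => /= Hz.
  case: (boolP (L u)) => // HnL; exfalso.
  by have := NOZERO (exist _ (u, x) HE) u; rewrite (COL (notL HnL) (blk_in _) Hz) eqxx.
by have := NOZERO (exist _ (u, x) HE) x; rewrite (ROW (eqP HLx) (blk_in _) Hz) eqxx.
Qed.

Lemma chainL x p : path R x p -> L (last x p) -> connect qa (F x) (F (last x p)) /\ L x.
Proof.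
elim: p x => [|y p IH] x /=; first by [].
case/andP=> Hxy Hp HL; have [H1 H2] := IH _ Hp HL.
split; last exact: PropL Hxy H2.
exact: connect_trans (tr_conn (StepL Hxy H2)) H1.
Qed.

Lemma chainR x p : path R x p -> ~~ L x -> connect qa (F (last x p)) (F x).
Proof.
elim: p x => [|y p IH] x /=; first by [].
case/andP=> Hxy Hp HL.
have HLy : ~~ L y by apply: contra HL; apply: PropL Hxy.
exact: connect_trans (IH _ Hp HLy) (tr_conn (StepR Hxy HL)).
Qed.

Lemma zip_path (r : rel V) (q : pred (V * V)) x s y :
  path r x (rcons s y) -> (forall p, p \in zip (x :: s) (rcons s y) -> q p) ->
  path (fun a b => r a b && q (a, b)) x (rcons s y).
Proof.
elim: s x => [|z s IH] x /=.
  by rewrite andbT => -> /(_ (x, y)); rewrite inE eqxx => ->.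
case/andP=> H1 H2 Hq; rewrite H1 (Hq (x, z)) ?inE ?eqxx //=.
by apply: IH => // p Hp; apply: Hq; rewrite inE Hp orbT.
Qed.

Lemma FAS : feedback_arc_set E (singleton_arcs pi).
Proof.
split.
  apply/subsetP => a; rewrite inE => /existsP [b /andP [/eqP <- _]]; exact: valP.
move=> c [Hc _ Hcyc].
case: (boolP (has (mem (singleton_arcs pi)) (cycle_arcs c))).
  by case/hasP => a H1 H2; exists a.
move/hasPn => Hno; exfalso.
case: c Hc Hcyc Hno => [|c0 s] // _ Hcyc Hno.
have HP : path R c0 (rcons s c0).
  have := @zip_path (garc E) (fun p => p \notin singleton_arcs pi) c0 s c0 Hcyc.
  by move=> H; apply: H => p Hp; apply: Hno; rewrite /cycle_arcs rot1_cons.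
case Hrs : (rcons s c0) HP => [|y rest] HP.
  by move: (f_equal size Hrs); rewrite size_rcons.
have Hlast : last y rest = c0.
  by move: (f_equal (last c0) Hrs); rewrite last_rcons /=.
move: HP => /= /andP [H0 Hp].
case: (boolP (L c0)) => HL.
  have HLl : L (last y rest) by rewrite Hlast.
  have [H1 H2] := chainL Hp HLl.
  rewrite Hlast in H1.
  exact: tr_contra (StepL H0 H2) H1.
have HLy : ~~ L y by apply: contra HL; apply: PropL H0.
have := chainR Hp HLy; rewrite Hlast => H1.
exact: tr_contra (StepR H0 HL) H1.
Qed.

Definition gg (p : V * Ix) : {set T} :=
  if L p.1 then blk (inl (p.1, p.2, ord0)) else blk (inl (p.1, ord0, p.2)).

Lemma gg_in p : gg p \in pi.
Proof. by rewrite /gg; case: ifP => _; apply: blk_in. Qed.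

Lemma gg_x p : exists i j, (inl (p.1, i, j) : T) \in gg p.
Proof.
case: p => v i; rewrite /gg /=; case: (L v); [exists i, ord0 | exists ord0, i]; exact: mem_blk.
Qed.

Lemma gg_inj : injective gg.
Proof.
move=> [v i] [v' i'] Heq.
have [i1 [j1 H1]] := gg_x (v, i).
have [i2 [j2 H2]] := gg_x (v', i').
rewrite -Heq in H2.
have [Hv] := LBL (gg_in (v, i)) H1 H2 isT isT; subst v'.
move: Heq; rewrite /gg /=; case: (boolP (L v)) => HL Heq.
  have Hm : (inl (v, i', ord0) : T) \in blk (inl (v, i, ord0)) by rewrite Heq mem_blk.
  by rewrite (ROW (eqP HL) (blk_in _) (mem_blk _)) in Hm; rewrite (eqP Hm).
have Hm : (inl (v, ord0, i') : T) \in blk (inl (v, ord0, i)) by rewrite Heq mem_blk.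
by rewrite (COL (notL HL) (blk_in _) (mem_blk _)) in Hm; rewrite (eqP Hm).
Qed.

Lemma COUNT : #|singleton_arcs pi| + #|V| * (#|E| + 1) <= #|pi|.
Proof.
set A1 := [set gg p | p in [set: V * Ix]].
set Bset := [set b : EV E | [set (inr b : T)] \in pi].
set A2 := [set [set (inr b : T)] | b in Bset].
have H1 : #|A1| = #|V| * (#|E| + 1).
  by rewrite card_imset; [rewrite cardsT card_prod card_ord addn1 | exact: gg_inj].
have H2 : #|A2| = #|Bset|.
  rewrite card_imset // => b1 b2 Hbb.
  have : (inr b1 : T) \in [set (inr b2 : T)] by rewrite -Hbb inE.
  by rewrite inE => /eqP [].
have H3 : singleton_arcs pi = [set val b | b in Bset].
  apply/setP => a; rewrite inE; apply/existsP/imsetP.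
    by case=> b /andP [/eqP <- Hb]; exists b; rewrite ?inE.
  by case=> b Hb ->; exists b; rewrite eqxx; rewrite inE in Hb.
have H4 : #|singleton_arcs pi| = #|Bset| by rewrite H3 card_imset //; exact: val_inj.
have Hdisj : A1 :&: A2 = set0.
  apply/setP => X; rewrite !inE; apply/negP => /andP [/imsetP [p _ ->] /imsetP [b _ Hb]].
  have [i [j Hx]] := gg_x p; by rewrite Hb inE in Hx.
have Hsub : A1 :|: A2 \subset pi.
  apply/subsetP => X; rewrite inE => /orP [/imsetP [p _ ->]|/imsetP [b Hb ->]].
    exact: gg_in.
  by rewrite inE in Hb.
have := subset_leq_card Hsub; rewrite cardsU Hdisj cards0 subn0 H1 H2 H4 addnC //.
Qed.

End Proof5.

Theorem lemma5p9 (V : finType) (E : {set V * V}) (e : V * V -> nat)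
  (HV : 0 < #|V|)
  (Hloop : forall v : V, (v, v) \notin E)
  (Hdeg : forall v : V,
      #|[set u : V | (u, v) \in E]| = 1 \/ #|[set u : V | (v, u) \in E]| = 1)
  (He_inj : {in E &, injective e})
  (He_rng : forall a, a \in E -> 0 < e a <= #|E|)
  (pi : {set {set PV E}})
  (Hpi : Hstar_partition (Parc e) pi)
  (Hwo : forall v : V, well_oriented pi v) :
  feedback_arc_set E (singleton_arcs pi) /\
  #|singleton_arcs pi| + #|V| * (#|E| + 1) <= #|pi|.
Proof.
split; [exact: (FAS Hloop He_rng Hpi Hwo) | exact: (COUNT Hpi Hwo)].
Qed.
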